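(* Let $\gamma\in(0,1)$, $\mu\in(0,\infty)\setminus\{1\}$. Let $g$ be a concave traveling wave with compact nonempty support and speed $v$, normalized so that $\sup\{x:g(x)>0\}=0$. Let $s=\sup\{\xi:\sup_x\Phi_\xi[g](x)\ge\gamma\}$. Then $v>0$, and $$v=\begin{cases}\dfrac{1-\gamma-\mu s}{1-\mu} & \text{if } v\le s,\\[2mm] 1-\gamma & \text{if } v>s.\end{cases}$$
   Context: Let $\pi(x)=x$ if $x\ge0$ and $\pi(x)=-\infty$ otherwise. Write $x_+=\max(x,0)$ and use $\sup\emptyset=-\infty$. Define $\Phi_\xi[h](x)=1-\gamma-\mu(\xi-x)_++\sup_y(h(y)-|x-y|)$. The dynamics is defined for $n\ge1$ by: - $p_n(x)=\pi[1-\gamma+\sup_y(g_{n-1}(y)-\min(1,\mu)(x-y)_+)]$; - $s_n=\sup\{x:p_n(x)\ge\gamma\}$; - $g_n=\pi\circ\Phi_{s_n}[g_{n-1}]$. A traveling wave with speed $v$ is a $g$ with $g_0=g\Rightarrow g_n(x)=g(x-nv)$ for all $n,x$. The support is $\{g\ge0\}$. *)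

(* Defs.v *)
(* R : realType, extended reals \bar R model R ∪ {-∞} (and +∞). *)
From HB Require Import structures.
From mathcomp Require Import all_boot all_order all_algebra.
From mathcomp Require Import all_classical all_reals all_analysis.
Set Implicit Arguments. Unset Strict Implicit. Unset Printing Implicit Defensive.
Import Order.TTheory GRing.Theory Num.Theory numFieldNormedType.Exports.
Local Open Scope classical_set_scope.
Local Open Scope ring_scope.
Local Open Scope ereal_scope.

Section Dyn.
Variable R : realType.

Definition piE (x : \bar R) : \bar R := if 0 <= x then x else -oo.

Definition pospart (x : R) : R := Num.max x 0%R.

(* Phi_xi[h](x) = 1 - gamma - mu (xi - x)_+ + sup_y (h y - |x - y|);
   xi is allowed to be an extended real (s_n may be infinite),
   (xi - x)_+ is computed in \bar R. *)
Definition Phi (gamma mu : R) (xi : \bar R) (h : R -> \bar R) (x : R) : \bar R :=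
  (1 - gamma)%R%:E - mu%:E * maxe (xi - x%:E) 0
  + ereal_sup [set h y - `|x - y|%R%:E | y in [set: R]].

Definition p_of (gamma mu : R) (h : R -> \bar R) (x : R) : \bar R :=
  piE ((1 - gamma)%R%:E
       + ereal_sup [set h y - (Num.min 1 mu * pospart (x - y))%R%:E | y in [set: R]]).

Definition s_of (gamma mu : R) (h : R -> \bar R) : \bar R :=
  ereal_sup [set x%:E | x in [set x : R | gamma%:E <= p_of gamma mu h x]].

Definition step (gamma mu : R) (h : R -> \bar R) : R -> \bar R :=
  fun x => piE (Phi gamma mu (s_of gamma mu h) h x).

Definition gseq (gamma mu : R) (g : R -> \bar R) (n : nat) : R -> \bar R :=
  iter n (step gamma mu) g.

Definition traveling_wave (gamma mu : R) (g : R -> \bar R) (v : R) : Prop :=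
  forall (n : nat) (x : R), gseq gamma mu g n x = g (x - n%:R * v)%R.

Definition supp (g : R -> \bar R) : set R := [set x | 0 <= g x].

Definition concaveE (g : R -> \bar R) : Prop :=
  forall (x y t : R), (0 < t < 1)%R ->
    t%:E * g x + (1 - t)%R%:E * g y <= g (t * x + (1 - t) * y)%R.

End Dyn.

(* Main.v *)
Require Import Defs.
From HB Require Import structures.
From mathcomp Require Import all_boot all_order all_algebra.
From mathcomp Require Import all_classical all_reals all_analysis.
From mathcomp Require Import ring lra.
Set Implicit Arguments. Unset Strict Implicit.
Import Order.TTheory GRing.Theory Num.Theory numFieldNormedType.Exports.
Local Open Scope classical_set_scope.
Local Open Scope ring_scope.
Local Open Scope ereal_scope.

Section Aux.
Variable R : realType.
Implicit Types (x y z : R) (g : R -> \bar R).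

Lemma pp_ge0 x : (0 <= pospart x)%R.
Proof. by rewrite /pospart le_max lexx orbT. Qed.
Lemma pp_ge x : (x <= pospart x)%R.
Proof. by rewrite /pospart le_max lexx. Qed.
Lemma pp_pos x : (0 <= x)%R -> pospart x = x.
Proof. by move=> h; rewrite /pospart max_l. Qed.
Lemma pp_neg x : (x <= 0)%R -> pospart x = 0%R.
Proof. by move=> h; rewrite /pospart max_r. Qed.

Definition Gf g x : \bar R := ereal_sup [set g y - `|x - y|%:E | y in [set: R]].

Lemma G_ge g x y : g y - `|x - y|%:E <= Gf g x.
Proof. by apply: ereal_sup_ubound; exists y. Qed.

Lemma PhiE (gamma mu s : R) g x : Phi gamma mu s%:E g x =
  ((1 - gamma) - mu * pospart (s - x))%:E + Gf g x.
Proof. by rewrite /Phi /pospart -EFin_max. Qed.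

Lemma piE_ge0 (a : R) (z : \bar R) : (0 < a)%R -> (a%:E <= Defs.piE z) = (a%:E <= z).
Proof.
move=> a0; rewrite /Defs.piE; case: ifP => // /negbT; rewrite -ltNge => z0.
apply/esym/negbTE; rewrite -ltNge; apply: (lt_trans z0); by rewrite lte_fin.
Qed.

Lemma piE_pos (z : \bar R) : (0 < Defs.piE z) = (0 < z).
Proof.
rewrite /Defs.piE; case: ifP => // /negbT; rewrite -ltNge => z0.
by apply/esym/negbTE; rewrite -leNgt ltW.
Qed.

Lemma piE_cases (z : \bar R) : Defs.piE z = -oo \/ (0 <= z /\ Defs.piE z = z).
Proof. rewrite /Defs.piE; case: ifP => h; by [right|left]. Qed.


Definition Hf (mu : R) g (xi : R) : \bar R :=
  ereal_sup [set g y - (Num.min 1 mu * pospart (xi - y))%:E | y in [set: R]].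

Lemma supPhi (gamma mu : R) g xi : (0 < mu)%R -> (forall x, g x != +oo) ->
  ereal_sup [set Phi gamma mu xi%:E g x | x in [set: R]] = (1 - gamma)%:E + Hf mu g xi.
Proof.
move=> mu0 gfin; apply/eqP; rewrite eq_le; apply/andP; split.
- apply: ge_ereal_sup => _ [x _ <-]; rewrite PhiE.
  set d := (mu * pospart (xi - x))%R.
  have HG : Gf g x <= Hf mu g xi + d%:E.
    apply: ge_ereal_sup => _ [y _ <-].
    have hy : g y - (Num.min 1 mu * pospart (xi - y))%:E <= Hf mu g xi.
      by apply: ereal_sup_ubound; exists y.
    have rl : (Num.min 1 mu * pospart (xi - y) <= `|x - y| + d)%R.
      rewrite /d; have := pp_ge0 (xi - x); have := pp_ge (xi - x).
      have := pp_ge0 (xi - y); have := ler_norm (x - y).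
      have [hxy|hxy] := leP xi y.
        rewrite (@pp_neg (xi - y)); last by lra.
        move=> *; rewrite mulr0; have := normr_ge0 (x - y)%R; nra.
      rewrite (@pp_pos (xi - y)); last by lra.
      have hm1 : (Num.min 1 mu <= 1)%R by rewrite ge_min lexx.
      have hm2 : (Num.min 1 mu <= mu)%R by rewrite ge_min lexx orbT.
      have m0 : (0 <= Num.min 1 mu)%R by rewrite le_min ler01 ltW.
      move=> h1 h2 h3 h4.
      have := normr_ge0 (x - y)%R => h5.
      have p1 : (0 <= Num.min 1 mu * (pospart (xi - x) - (xi - x)))%R.
        by apply: mulr_ge0 => //; rewrite subr_ge0.
      have p2 : (0 <= (mu - Num.min 1 mu) * pospart (xi - x))%R.
        by apply: mulr_ge0 => //; rewrite subr_ge0.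
      have p3 : (0 <= (1 - Num.min 1 mu) * `|x - y|)%R.
        by apply: mulr_ge0 => //; rewrite subr_ge0.
      have p4 : (0 <= Num.min 1 mu * (`|x - y| - (x - y)))%R.
        by apply: mulr_ge0 => //; rewrite subr_ge0.
      nra.
    apply: le_trans (leeD2r _ hy); move: (gfin y).
    case: (g y) => [r||] //= _; rewrite lee_fin; lra.
  apply: le_trans (leeD2l _ HG) _.
  case: (Hf mu g xi) => [r||] //=; rewrite ?lee_fin; lra.
- set S := ereal_sup _.
  rewrite addeC -leeBrDr //.
  apply: ge_ereal_sup => _ [y _ <-].
  rewrite leeBrDr // addeC.
  have [xy rl] : exists xy, (1 - gamma - Num.min 1 mu * pospart (xi - y) <=
             1 - gamma - mu * pospart (xi - xy) - `|xy - y|)%R.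
    have [hmu|hmu] := leP mu 1%R.
      exists y; rewrite subrr normr0; lra.
    have [hxy|hxy] := leP xi y.
      exists y; rewrite subrr normr0 !pp_neg; by lra.
    exists xi; rewrite subrr (@pp_neg 0) ?lexx // (@pp_pos (xi - y)); last by lra.
    rewrite ger0_norm; lra.
  have h1 : Phi gamma mu xi%:E g xy <= S by apply: ereal_sup_ubound; exists xy.
  apply: le_trans h1; rewrite PhiE.
  have := G_ge g xy y; move: (gfin y).
  case: (Gf g xy) => [q||] //=; case: (g y) => [r||] //= _;
    rewrite ?addNye ?addeNy ?leNye ?leey ?lee_fin //.
  + move=> h; lra.
Qed.


Lemma s_eq (gamma mu : R) g : (0 < gamma)%R -> (0 < mu)%R -> (forall x, g x != +oo) ->
  ereal_sup [set xi%:E | xi in [set xi : R | gamma%:E <=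
     ereal_sup [set Phi gamma mu xi%:E g x | x in [set: R]]]] = s_of gamma mu g.
Proof.
move=> g0 mu0 gfin; rewrite /s_of.
have -> // : [set xi : R | gamma%:E <= ereal_sup [set Phi gamma mu xi%:E g x | x in [set: R]]]
  = [set x : R | gamma%:E <= p_of gamma mu g x].
apply/seteqP; split => xi /=; rewrite supPhi // /p_of piE_ge0 //.
Qed.


Lemma pp_mono (a b : R) : (a <= b)%R ->
  (0 <= pospart b - pospart a)%R /\ (pospart b - pospart a <= b - a)%R.
Proof.
move=> ab; have [ha|ha] := leP 0%R a.
  by rewrite !pp_pos //; [lra|lra].
have [hb|hb] := leP 0%R b.
  by rewrite pp_pos // pp_neg; [lra|lra].
by rewrite !pp_neg; [lra|lra|lra].
Qed.

Lemma G_lip g w x : Gf g w <= Gf g x + `|w - x|%:E.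
Proof.
apply: ge_ereal_sup => _ [y _ <-].
have h := G_ge g x y.
have tri : (`|x - y| <= `|w - x| + `|w - y|)%R.
  have := ler_distD w x y; have := distrC x w; lra.
move: h; case: (g y) => [r||]; case: (Gf g x) => [q||] //=;
  rewrite ?addNye ?addeNy ?leNye ?leey ?lee_fin //.
- move=> h; lra.
Qed.

End Aux.

Section Main.
Variable R : realType.
Variables (gamma mu v : R) (g : R -> \bar R).
Implicit Types (x y z w e : R).
Hypotheses (hg : (0 < gamma < 1)%R) (hmu : (0 < mu)%R) (hmu1 : mu != 1%R)
  (gfin : forall x, g x != +oo) (gconc : concaveE g)
  (tw : traveling_wave gamma mu g v) (hsupp : supp g !=set0)
  (hcomp : compact (supp g))
  (hedge : ereal_sup [set x%:E | x in [set x : R | 0 < g x]] = 0).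

Let hg0 : (0 < gamma)%R. Proof. by case/andP: hg. Qed.
Let hg1 : (gamma < 1)%R. Proof. by case/andP: hg. Qed.

Local Ltac clear_ereal := repeat match goal with
  H : ?P |- _ => lazymatch P with context [extended] => clear H end end.
Local Ltac lr := have ? := hg0; have ? := hg1; have ? := hmu; clear_ereal; lra.

Lemma tw1 x : g (x - v)%R = Defs.piE (Phi gamma mu (s_of gamma mu g) g x).
Proof. by have := tw 1%N x; rewrite /gseq /= mul1r. Qed.

Lemma edge1 z : 0 < g z -> (z <= 0)%R.
Proof.
move=> h; rewrite -lee_fin.
have -> : 0%:E = ereal_sup [set x%:E | x in [set x : R | 0 < g x]] by rewrite hedge.
by apply: ereal_sup_ubound; exists z.
Qed.

Lemma edge2 e : (0 < e)%R -> exists z, (- e < z)%R /\ 0 < g z.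
Proof.
move=> e0; have : (- e)%:E < ereal_sup [set x%:E | x in [set x : R | 0 < g x]].
  by rewrite hedge lte_fin oppr_lt0.
by case/ereal_sup_gt => _ [z hz <-]; rewrite lte_fin => hz'; exists z.
Qed.


Lemma G_self x : g x <= Gf g x.
Proof. by have := G_ge g x x; rewrite subrr normr0 sube0. Qed.

Lemma Hf_self x : g x <= Hf mu g x.
Proof.
have : g x - (Num.min 1 mu * pospart (x - x))%:E <= Hf mu g x.
  by apply: ereal_sup_ubound; exists x.
by rewrite subrr pp_neg // mulr0 sube0.
Qed.

Lemma s_fin : exists s : R, s_of gamma mu g = s%:E.
Proof.
case hs: (s_of gamma mu g) => [s||]; first by exists s.
- exfalso; case: hsupp => z hz; move: hz; rewrite /supp /=.
  have := tw1 (z + v); rewrite addrK hs => ->.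
  rewrite /Phi /Defs.piE.
  have -> : forall a : R, maxe (+oo - a%:E) 0 = +oo by [].
  by rewrite gt0_muley ?lte_fin // addeNy addNye.
- exfalso; case: hsupp => z0 hz0; move: hz0; rewrite /supp /= => hz0.
  have key : forall n : nat, (n%:R * (1 - gamma))%:E <= g (z0 - n%:R * v)%R.
    elim=> [|n IH]; first by rewrite mul0r mul0r subr0.
    have -> : (z0 - n.+1%:R * v = (z0 - n%:R * v) - v)%R.
      by rewrite -natr1 mulrDl mul1r; lr.
    rewrite tw1 hs /Phi.
    have -> : forall a : R, maxe (-oo - a%:E) 0 = 0 by move=> a; rewrite addNye maxNye.
    rewrite mule0 sube0.
    have h1 := G_self (z0 - n%:R * v)%R.
    have h2 : (n.+1%:R * (1 - gamma))%:E <= (1 - gamma)%:E + Gf g (z0 - n%:R * v).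
      rewrite -natr1 mulrDl mul1r EFinD (addeC (1 - gamma)%:E); apply: leeD2r.
      exact: le_trans IH h1.
    rewrite /Defs.piE ifT; first exact: h2.
     apply: le_trans h2; rewrite lee_fin.
    apply: mulr_ge0; [exact: ler0n | lr].
  have g1 : (0 < 1 - gamma)%R by lr.
  have := @archi_boundP _ (1 - gamma)^-1%R; rewrite invr_ge0 ltW // => /(_ isT).
  set n := Num.Def.archi_bound _ => hn.
  have hn' : (1 < n%:R * (1 - gamma))%R.
    by rewrite -ltr_pdivrMr // mul1r.
  set z := (z0 - n%:R * v)%R.
  have : z%:E <= s_of gamma mu g.
    apply: ereal_sup_ubound; exists z => //=.
    rewrite /p_of piE_ge0; last by lr.
    apply: le_trans (leeD2l _ (le_trans (key n) (Hf_self z))).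
    rewrite -EFinD lee_fin; lr.
  by rewrite hs.
Qed.


Variable s : R.
Hypothesis hs : s_of gamma mu g = s%:E.

Definition cc x := (1 - gamma - mu * pospart (s - x))%R.
Definition Ph x := (cc x)%:E + Gf g x.

Lemma twP x : g (x - v)%R = Defs.piE (Ph x).
Proof. by rewrite tw1 hs PhiE. Qed.

Lemma Ph_lip w x : Ph w <= Ph x + (cc w - cc x + `|w - x|)%:E.
Proof.
rewrite /Ph; apply: le_trans (leeD2l _ (G_lip g w x)) _.
case: (Gf g x) => [q||] //=; rewrite ?addNye ?addeNy ?leNye ?leey ?lee_fin //.
lr.
Qed.

Lemma Ph_left w x : (w <= x)%R -> Ph w <= Ph x + (x - w)%:E.
Proof.
move=> wx; apply: le_trans (Ph_lip w x) _; apply: leeD2l; rewrite lee_fin.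
have [h1 h2] := @pp_mono R (s - x)%R (s - w)%R ltac:(lr).
rewrite /cc distrC ger0_norm; last by lr.
have := mulr_ge0 (ltW hmu) h1; lr.
Qed.

Lemma Ph_right w x : (x <= w)%R -> Ph w <= Ph x + ((1 + mu) * (w - x))%:E.
Proof.
move=> wx; apply: le_trans (Ph_lip w x) _; apply: leeD2l; rewrite lee_fin.
have [h1 h2] := @pp_mono R (s - w)%R (s - x)%R ltac:(lr).
rewrite /cc ger0_norm; last by lr.
have : (mu * (pospart (s - x) - pospart (s - w)) <= mu * (w - x))%R.
  by rewrite ler_pM2l //; lr.
lr.
Qed.


Lemma Ph_pos x : 0 < Ph x -> (x <= v)%R.
Proof.
rewrite -piE_pos -twP => /edge1; lr.
Qed.

Lemma Ph_near e : (0 < e)%R -> exists x, (v - e < x)%R /\ (x <= v)%R /\ 0 < Ph x.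
Proof.
move=> e0; have [z [hz gz]] := edge2 e0.
exists (z + v)%R; have := edge1 gz; rewrite -piE_pos -twP addrK => hz0.
split; [lr | split; [lr | done]].
Qed.

Lemma Ph_v : Ph v = 0.
Proof.
apply/eqP; rewrite eq_le; apply/andP; split.
- apply/lee_addgt0Pr => e e0; rewrite add0e.
  have := Ph_left (w := v) (x := v + e)%R ltac:(lr).
  have -> : (v + e - v = e)%R by lr.
  move/le_trans; apply; rewrite -[X in _ <= X]add0e; apply: leeD2r.
  rewrite leNgt; apply/negP => /Ph_pos; lr.
- apply/lee_addgt0Pr => e e0.
  have [x [h1 [h2 h3]]] := Ph_near e0.
  apply: (le_trans (ltW h3)); apply: le_trans (Ph_left h2) _.
  apply: leeD2l; rewrite lee_fin; lr.
Qed.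

Lemma g0 : g 0%R = 0.
Proof. by have := twP v; rewrite subrr Ph_v /Defs.piE lexx. Qed.

Lemma gvals y : g y = -oo \/ (0 <= g y /\ g y = Ph (y + v)%R).
Proof.
have := twP (y + v)%R; rewrite addrK => ->.
by case: (piE_cases (Ph (y + v)%R)) => [h|[h1 h2]]; [left|right]; rewrite ?h2.
Qed.


Lemma g_le y : g y <= (- y)%:E.
Proof.
case: (gvals y) => [->|[gy0 gyE]]; first exact: leNye.
have [yle|ylt] := leP y 0%R.
  rewrite gyE; have := Ph_left (w := (y + v)%R) (x := v) ltac:(lr).
  rewrite Ph_v add0e; have -> : (v - (y + v) = - y)%R by lr.
  done.
exfalso.
have gy : g y = 0.
  apply/eqP; rewrite eq_le gy0 andbT leNgt; apply/negP => /edge1; lr.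
have [z0 [_ gz0]] := edge2 (@ltr01 R).
have z0le := edge1 gz0.
pose t := (y / (2 * (y - z0)))%R.
have t0 : (0 < t)%R by apply: divr_gt0 => //; lr.
have td : (t * (y - z0) = y / 2)%R by rewrite /t; field; lr.
have t1 : (t < 1)%R.
  rewrite ltNge; apply/negP => ht.
  have : ((1 - t) * (y - z0) <= 0)%R by apply: mulr_le0_ge0; lr.
  lr.
have := gconc z0 y (t := t) ltac:(apply/andP; split; lr).
rewrite gy mule0 adde0 => hc.
have : 0 < g (t * z0 + (1 - t) * y)%R.
  apply: lt_le_trans hc; apply: mule_gt0 => //; by rewrite lte_fin.
move/edge1; lr.
Qed.


Lemma G_le x : Gf g x <= (- x)%:E.
Proof.
apply: ge_ereal_sup => _ [y _ <-].
apply: le_trans (leeD2r _ (g_le y)) _.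
rewrite -EFinB lee_fin; have := ler_norm (x - y)%R; lr.
Qed.

Lemma G_ge_abs x : (- `|x|)%:E <= Gf g x.
Proof. by have := G_ge g x 0%R; rewrite g0 subr0 add0e. Qed.

Lemma g_bnd : exists B : R, forall y, g y <= B%:E.
Proof.
have := compact_bounded hcomp.
rewrite /bounded_set => /pinfty_ex_gt0 [B B0 HB].
exists B => y; case: (gvals y) => [->|[gy0 _]]; first exact: leNye.
have := HB y gy0; have := g_le y => h1 h2.
apply: le_trans h1 _; rewrite lee_fin; have := ler_norm (- y)%R; rewrite normrN; move: h2; rewrite /= => h2; lr.
Qed.


Lemma v_pos : (0 < v)%R.
Proof.
rewrite ltNge; apply/negP => vle.
have Ph0 : Ph 0%R <= 0.
  rewrite leNgt; apply/negP => h.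
  have ev : v = 0%R by have := Ph_pos h; lr.
  by move: h; rewrite -ev Ph_v ltxx.
have G0 : Gf g 0%R = 0.
  apply/eqP; rewrite eq_le; have := G_le 0%R; have := G_ge_abs 0%R.
  by rewrite normr0 oppr0 => -> ->.
have c0 : (cc 0 <= 0)%R by move: Ph0; rewrite /Ph G0 adde0 lee_fin.
have [B hB] := g_bnd.
pose M := ereal_sup (range g).
have [z0 [_ gz0]] := edge2 (@ltr01 R).
have MB : M <= B%:E by apply: ge_ereal_sup => _ [y _ <-]; exact: hB y.
have Mz : g z0 <= M by apply: ereal_sup_ubound; exists z0.
have [m Mm] : exists m, M = m%:E.
  case hM: M => [m||]; first by exists m.
  - by move: MB; rewrite hM leye_eq.
  - by move: (lt_le_trans gz0 Mz); rewrite hM ltNge leNye.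
have m0 : (0 < m)%R by rewrite -lte_fin -Mm; exact: lt_le_trans gz0 Mz.
pose th := (m / (1 + mu))%R.
have thd : (th * (1 + mu) = m)%R by rewrite /th divfK //; lr.
have th0 : (0 < th)%R by apply: divr_gt0 => //; lr.
have th_lt : th%:E < M.
  rewrite Mm lte_fin; have := mulr_gt0 th0 hmu; lr.
have [_ [z _ <-] gz] := ereal_sup_gt th_lt.
have GM : Gf g (z + v)%R <= M.
  apply: ge_ereal_sup => _ [y _ <-].
  have hy : g y <= M by apply: ereal_sup_ubound; exists y.
  apply: le_trans hy; rewrite leeBlDr // leeDl // lee_fin.
have gzle := g_le z.
case: (gvals z) => [gzoo|[_ gzE]]; first by move: gz; rewrite gzoo.
have [a ga] : exists a, g z = a%:E.
  move: gz (gfin z); case: (g z) => [a||] //; by exists a.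
have hPh : Ph (z + v)%R <= (cc (z + v) + m)%:E.
  by rewrite /Ph (EFinD (cc _) m); apply: leeD2l; rewrite -Mm.
move: gz gzle hPh; rewrite -gzE ga !lte_fin !lee_fin => h1 h2 h3.
have sp : (0 < s)%R.
  rewrite ltNge; apply/negP => sle.
  move: c0; rewrite /cc subr0 pp_neg // mulr0; lr.
have e1 : pospart (s - (z + v)) = (s - (z + v))%R by rewrite pp_pos //; lr.
have e0 : pospart (s - 0) = s by rewrite subr0 pp_pos //; lr.
move: h3 c0; rewrite /cc e1 e0 => h3 c0.
have p1 : (mu * (z + v) <= mu * (- a))%R by rewrite ler_pM2l //; lr.
have p2 : (0 < (a - th) * (1 + mu))%R by apply: mulr_gt0; lr.
lr.
Qed.


Lemma v_eq : (1 - gamma - mu * pospart (s - v) - v = 0)%R.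
Proof.
have vp := v_pos.
have Gv : Gf g v = (- v)%:E.
  apply/eqP; rewrite eq_le G_le /=; have := G_ge_abs v.
  by rewrite gtr0_norm.
have := Ph_v; rewrite /Ph Gv -EFinD => /eqP; rewrite eqe => /eqP.
by rewrite /cc.
Qed.

End Main.
Unset Implicit Arguments. Set Strict Implicit.

Theorem lemmaS3p4 (R : realType) (gamma mu : R) (g : R -> \bar R) (v : R) :
  (0 < gamma < 1)%R -> (0 < mu)%R -> mu != 1%R ->
  (forall x, g x != +oo) ->
  concaveE g ->
  traveling_wave gamma mu g v ->
  supp g !=set0 -> compact (supp g) ->
  ereal_sup [set x%:E | x in [set x : R | 0 < g x]] = 0 ->
  let s := ereal_sup [set xi%:E | xi in
             [set xi : R | gamma%:E <= ereal_sup [set Phi gamma mu xi%:E g x | x in [set: R]]]] in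
  (0 < v)%R /\
  (v%:E <= s -> exists s0 : R, s = s0%:E /\ v = ((1 - gamma - mu * s0) / (1 - mu))%R) /\
  (s < v%:E -> v = (1 - gamma)%R).
Proof.
move=> hg hmu hmu1 gfin gconc tw hsupp hcomp hedge s.
have [hg0 hg1] := andP hg.
have [s0 hs0] := s_fin hg hmu tw hsupp.
have hs : s = s0%:E by rewrite /s s_eq.
have vp := v_pos hg hmu gfin gconc tw hcomp hedge hs0.
have ve := v_eq hg hmu gfin gconc tw hcomp hedge hs0.
have h1m : (1 - mu != 0)%R by rewrite subr_eq0 eq_sym.
split => //; split.
- rewrite hs lee_fin => vs; exists s0; split => //.
  rewrite pp_pos in ve; last by lra.
  apply: (canRL (mulfK h1m)); lra.
- rewrite hs lte_fin => sv.
  rewrite pp_neg in ve; last by lra.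
  lra.
Qed.
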